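(* Let $(\alpha,\beta)$ be an admissible, non-null pair and assume there is no $x\in(0,1)$ with $\pi_x(\alpha)=\pi_x(\beta)$. Let $a\in(1,2]$ and let $p\in[1-1/a,1/a]$ be such that $f_{(a,p,+)}(\pi_{1/a}(\omega))=\pi_{1/a}(S\omega)$ for all $\omega\in\Omega_{(\alpha,\beta,+)}$. Then $\Omega_{(\alpha,\beta,+)}\subseteq\Omega_{(a,p,+)}$, where $\Omega_{(a,p,+)}=\tau_{(a,p,+)}([0,1])$.
   Context: For $1<a\le2$, $1-\frac1a\le p\le\frac1a$: $f_{(a,p,+)}(x)=ax$ if $x<p$ and $ax+(1-a)$ if $x\ge p$, on $[0,1]$. $\Omega=\{0,1\}^\infty$ (infinite binary strings $\omega_0\omega_1\cdots$). With $I_0=[0,p)$, $I_1=[p,1]$, the itinerary $\tau_{(a,p,+)}(x)=\omega$ has $\omega_n=0$ if $f_{(a,p,+)}^n(x)\in I_0$ and $\omega_n=1$ if $f_{(a,p,+)}^n(x)\in I_1$. $S$ is the left shift, $\preceq$ the lexicographic order with intervals $[\alpha,\beta]=\{\omega:\alpha\preceq\omega\preceq\beta\}$ and half-open analogues. $(\alpha,\beta)$ is admissible if $\alpha_0=0,\alpha_1=1,\beta_0=1,\beta_1=0$ and $S^n\alpha\notin(\alpha,\beta]$, $S^n\beta\notin[\alpha,\beta)$ for all $n\ge0$. $\Omega_{(\alpha,\beta,-)}=\{\omega:S^n\omega\notin(\alpha,\beta]\ \forall n\ge0\}$, $\Omega_{(\alpha,\beta,+)}=\{\omega:S^n\omega\notin[\alpha,\beta)\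 \forall n\ge0\}$, $\Omega_{(\alpha,\beta)}$ their union. With $\Gamma_n=\{\omega_0\cdots\omega_n:\omega\in\Gamma\}$, $h(\Gamma)=\limsup_n\frac1n\ln|\Gamma_n|$, the pair is non-null if $h(\Omega_{(\alpha,\beta)})>0$. Projection: $\pi_x(\omega)=(1-x)\sum_{k\ge0}\omega_kx^k$. *)

(* Defs.v *)
From Stdlib Require Import Reals Lra List Classical ClassicalEpsilon.
From Coquelicot Require Import Coquelicot.
Open Scope R_scope.

(* Infinite binary strings omega_0 omega_1 ... ; true = symbol 1, false = 0. *)
Definition Omega := nat -> bool.

Definition S (w : Omega) : Omega := fun n => w (Datatypes.S n).

Definition lex_lt (w v : Omega) : Prop :=
  exists k, (forall i, (i < k)%nat -> w i = v i) /\ w k = false /\ v k = true.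
Definition lex_le (w v : Omega) : Prop := lex_lt w v \/ (forall i, w i = v i).

Definition in_oc (al be w : Omega) : Prop := lex_lt al w /\ lex_le w be.
Definition in_co (al be w : Omega) : Prop := lex_le al w /\ lex_lt w be.

Definition admissible (al be : Omega) : Prop :=
  al 0%nat = false /\ al 1%nat = true /\ be 0%nat = true /\ be 1%nat = false /\
  (forall n, ~ in_oc al be (Nat.iter n S al)) /\
  (forall n, ~ in_co al be (Nat.iter n S be)).

Definition Omega_minus (al be : Omega) (w : Omega) : Prop :=
  forall n, ~ in_oc al be (Nat.iter n S w).
Definition Omega_plus (al be : Omega) (w : Omega) : Prop :=
  forall n, ~ in_co al be (Nat.iter n S w).
Definition Omega_ab (al be : Omega) (w : Omega) : Prop :=
  Omega_minus al be w \/ Omega_plus al be w.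

Fixpoint all_words (n : nat) : list (list bool) :=
  match n with
  | O => nil :: nil
  | Datatypes.S m => map (cons false) (all_words m) ++ map (cons true) (all_words m)
  end.

Definition is_prefix (w : list bool) (v : Omega) : Prop :=
  forall i, (i < length w)%nat -> nth i w false = v i.

(* |Gamma_n| : number of words omega_0 ... omega_n (length n+1) realised in Gamma *)
Definition card_Gamma (G : Omega -> Prop) (n : nat) : nat :=
  length (filter (fun w =>
            if excluded_middle_informative (exists v, G v /\ is_prefix w v)
            then true else false)
          (all_words (Datatypes.S n))).

Definition entropy (G : Omega -> Prop) : Rbar :=
  LimSup_seq (fun n => / INR n * ln (INR (card_Gamma G n))).

Definition non_null (al be : Omega) : Prop :=
  Rbar_lt (Finite 0) (entropy (Omega_ab al be)).

Definition b2R (b : bool) : R := if b then 1 else 0.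
Definition proj (x : R) (w : Omega) : R :=
  (1 - x) * Series (fun k => b2R (w k) * x ^ k).

Definition f_plus (a p x : R) : R :=
  if Rlt_dec x p then a * x else a * x + (1 - a).

Definition tau_plus (a p x : R) : Omega :=
  fun n => if Rlt_dec (Nat.iter n (f_plus a p) x) p then false else true.

Definition Omega_ap_plus (a p : R) (w : Omega) : Prop :=
  exists x, 0 <= x <= 1 /\ forall n, tau_plus a p x n = w n.

(* Main.v *)
Require Import Defs.
From Stdlib Require Import Reals Lra Lia.
From Coquelicot Require Import Coquelicot.
Open Scope R_scope.

Lemma iterS_app n (w : Omega) k : Nat.iter n S w k = w (n + k)%nat.
Proof.
  revert k; induction n; intro k; simpl; auto.
  unfold S at 1. rewrite IHn. f_equal; lia.
Qed.

Lemma iter_shift n (w : Omega) : Nat.iter n S (S w) = Nat.iter (Datatypes.S n) S w.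
Proof.
  induction n; simpl; auto. rewrite IHn. reflexivity.
Qed.

Lemma plus_shift al be w : Omega_plus al be w -> Omega_plus al be (S w).
Proof. intros H n. rewrite iter_shift. apply H. Qed.

Lemma plus_iter al be w n : Omega_plus al be w -> Omega_plus al be (Nat.iter n S w).
Proof. induction n; simpl; auto. intros H; apply plus_shift; auto. Qed.

Section X.
Variable x : R.
Hypothesis hx : 0 < x < 1.

Lemma exs (w : Omega) : ex_series (fun k => b2R (w k) * x ^ k).
Proof.
  apply (@ex_series_le R_AbsRing R_CompleteNormedModule) with (b := fun k => x ^ k).
  - intros n. unfold norm; simpl. unfold abs; simpl.
    rewrite Rabs_pos_eq.
    + destruct (w n); simpl; pose proof (pow_le x n); lra.
    + destruct (w n); simpl; pose proof (pow_le x n); lra.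
  - exists (/ (1 - x)). apply is_series_geom. rewrite Rabs_pos_eq; lra.
Qed.

Lemma proj_dec (w : Omega) : proj x w = (1 - x) * b2R (w 0%nat) + x * proj x (S w).
Proof.
  unfold proj. rewrite Series_incr_1 by apply exs.
  assert (E : Series (fun k => b2R (w (Datatypes.S k)) * x ^ Datatypes.S k)
     = x * Series (fun n : nat => b2R (S w n) * x ^ n)).
  { rewrite <- Series_scal_l. apply Series_ext; intros n; unfold S; simpl; ring. }
  rewrite E. simpl. ring.
Qed.

Lemma proj_bounds (w : Omega) : 0 <= proj x w <= 1.
Proof.
  unfold proj.
  assert (Hs : is_series (fun n => x ^ n) (/ (1 - x))).
  { apply is_series_geom. rewrite Rabs_pos_eq; lra. }
  split.
  - apply Rmult_le_pos; [lra|].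
    replace 0 with (Series (fun n => 0 * (x ^ n))).
    + apply Series_le.
      * intros n; destruct (w n); simpl; pose proof (pow_le x n); lra.
      * apply exs.
    + rewrite Series_scal_l; ring.
  - assert (Series (fun k => b2R (w k) * x ^ k) <= / (1 - x)).
    { rewrite <- (is_series_unique _ _ Hs). apply Series_le.
      - intros n; destruct (w n); simpl; pose proof (pow_le x n); lra.
      - eexists; eauto. }
    assert (0 < 1 - x) by lra.
    apply Rmult_le_compat_l with (r := 1 - x) in H; [|lra].
    rewrite Rinv_r in H; lra.
Qed.
End X.

Theorem lemma3 (al be : Omega) (a p : R) :
  admissible al be ->
  non_null al be ->
  ~ (exists x, 0 < x < 1 /\ proj x al = proj x be) ->
  1 < a <= 2 ->
  1 - / a <= p <= / a ->
  (forall w, Omega_plus al be w ->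
     f_plus a p (proj (/ a) w) = proj (/ a) (S w)) ->
  forall w, Omega_plus al be w -> Omega_ap_plus a p w.
Proof.
  intros _ _ _ Ha Hp Hf w Hw.
  assert (hx : 0 < / a < 1).
  { split. apply Rinv_0_lt_compat; lra.
    rewrite <- Rinv_1. apply Rinv_lt_contravar; lra. }
  exists (proj (/ a) w). split; [apply proj_bounds; auto|].
  assert (Hit : forall n, Nat.iter n (f_plus a p) (proj (/a) w) = proj (/a) (Nat.iter n S w)).
  { induction n; simpl; auto. rewrite IHn. apply Hf. apply plus_iter; auto. }
  intros n. unfold tau_plus. rewrite Hit.
  set (v := Nat.iter n S w).
  assert (Hv : v 0%nat = w n) by (unfold v; rewrite iterS_app; f_equal; lia).
  rewrite <- Hv.
  assert (Hd := proj_dec _ hx v).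
  assert (Hfv := Hf v (plus_iter _ _ _ _ Hw)).
  assert (E : a * proj (/ a) v = (a - 1) * b2R (v 0%nat) + proj (/ a) (S v)).
  { rewrite Hd. field. lra. }
  unfold f_plus in Hfv.
  destruct (v 0%nat); simpl in E; destruct (Rlt_dec (proj (/ a) v) p); auto; lra.
Qed.
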